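(* Let $(q_n),(r_n)$ be complex sequences vanishing faster than any negative power of $|n|$ as $n\to\pm\infty$ with $1-q_nr_n\neq0$ and $1+q_nr_{n+1}\ne0$ for all $n$. Let $D_n,E_n,D_\infty,E_\infty$ and the sequences $u_n,v_n,p_n,s_n$ be as in the context. Let $\psi_n^{(q,r)},\phi_n^{(q,r)},\bar\psi_n^{(q,r)},\bar\phi_n^{(q,r)}$ be the Jost solutions of system (Q), and similarly with superscripts $(u,v)$ for system (U) with potentials $(u,v)$ and $(p,s)$ for system (U) with potentials $(p,s)$. Put $$\Gamma_n=\begin{bmatrix}(1-z^{-2})\frac1{E_{n-1}}&0\\ \frac{r_n}{E_{n-1}}&\frac1{D_{n-1}}\end{bmatrix},\qquad \Lambda_n=\begin{bmatrix}\frac1{E_{n-1}}&-\frac{q_n}{D_n}\\ \frac{r_n}{E_{n-1}}&\frac1{D_{n-1}}\end{bmatrix}.$$ Then $$\psi_n^{(q,r)}=D_\infty\Gamma_n\psi_n^{(u,v)}=D_\infty\Lambda_n\psi_n^{(p,s)},\qquad \phi_n^{(q,r)}=\frac{1}{1-z^{-2}}\Gamma_n\phi_n^{(u,v)}=\Lambda_n\phi_n^{(p,s)},$$ $$\bar\psi_n^{(q,r)}=\frac{E_\infty}{1-z^{-2}}\Gamma_n\bar\psi_n^{(u,v)}=E_\infty\Lambda_n\bar\psi_n^{(p,s)},\qquad \bar\phi_n^{(q,r)}=\Gamma_n\bar\phi_n^{(u,v)}=\Lambda_n\bar\phi_n^{(p,s)}.$$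
   Context: System (Q): $\begin{bmatrix}\alpha_n\\ \beta_n\end{bmatrix}=\begin{bmatrix} z & (z-z^{-1})q_n\\ z r_n & z^{-1}+(z-z^{-1})q_nr_n\end{bmatrix}\begin{bmatrix}\alpha_{n+1}\\ \beta_{n+1}\end{bmatrix}$, $n\in\mathbb Z$. System (U) with potentials $(a,b)$: $\begin{bmatrix}\xi_n\\ \eta_n\end{bmatrix}=\begin{bmatrix} z & z a_n\\ z^{-1}b_n & z^{-1}\end{bmatrix}\begin{bmatrix}\xi_{n+1}\\ \eta_{n+1}\end{bmatrix}$. Notation: $D_n=\prod_{j=-\infty}^n(1-q_jr_j)$, $E_n=\prod_{j=-\infty}^n(1+q_jr_{j+1})$, $D_\infty=\prod_{j\in\mathbb Z}(1-q_jr_j)$, $E_\infty=\prod_{j\in\mathbb Z}(1+q_jr_{j+1})$; $u_n=q_nE_{n-1}/D_n$, $v_n=(-r_n+r_{n+1}-q_nr_nr_{n+1})D_{n-1}/E_n$, $p_n=(q_n-q_{n+1}-q_nq_{n+1}r_{n+1})E_{n-1}/D_{n+1}$, $s_n=r_{n+1}D_n/E_n$. For each of the three systems and $|z|=1$, the Jost solutions (overbars are not complex conjugation) are the unique solutions with $\psi_n=\begin{bmatrix}o(1)\\ z^n[1+o(1)]\end{bmatrix}$ as $n\to+\infty$; $\phi_n=\begin{bmatrix}z^{-n}[1+o(1)]\\ o(1)\end{bmatrix}$ as $n\to-\infty$; $\bar\psi_n=\begin{bmatrix}z^{-n}[1+o(1)]\\ o(1)\end{bmatrix}$ as $n\to+\infty$;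 $\bar\phi_n=\begin{bmatrix}o(1)\\ z^{n}[1+o(1)]\end{bmatrix}$ as $n\to-\infty$. *)

(* Defs.v *)
From Stdlib Require Import Reals ZArith.
From Coquelicot Require Import Coquelicot.
Open Scope C_scope.

Definition Czpow (z : C) (n : Z) : C :=
  match n with
  | Z0 => 1
  | Zpos p => Cpow z (Pos.to_nat p)
  | Zneg p => / Cpow z (Pos.to_nat p)
  end.

Definition lim_pinf (f : Z -> C) (l : C) : Prop :=
  is_lim_seq (fun m : nat => Cmod (f (Z.of_nat m) - l)) 0%R.
Definition lim_minf (f : Z -> C) (l : C) : Prop :=
  is_lim_seq (fun m : nat => Cmod (f (- Z.of_nat m)%Z - l)) 0%R.

Definition rapid_decay (f : Z -> C) : Prop :=
  forall k : nat,
    is_lim_seq (fun m : nat => (INR m ^ k * Cmod (f (Z.of_nat m)))%R) 0%R /\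
    is_lim_seq (fun m : nat => (INR m ^ k * Cmod (f (- Z.of_nat m)%Z))%R) 0%R.

(* partial product  prod_{j = n-N}^{n} f j *)
Fixpoint pprod (f : Z -> C) (n : Z) (N : nat) : C :=
  match N with
  | O => f n
  | S N' => pprod f n N' * f (n - Z.of_nat (S N'))%Z
  end.

(* P = prod_{j=-oo}^{n} f j  (limit of the partial products) *)
Definition is_left_prod (f : Z -> C) (n : Z) (P : C) : Prop :=
  is_lim_seq (fun N : nat => Cmod (pprod f n N - P)) 0%R.

(* D_n = prod_{j<=n} (1 - q_j r_j),  E_n = prod_{j<=n} (1 + q_j r_{j+1}) *)
Definition D_fac (q r : Z -> C) (j : Z) : C := 1 - q j * r j.
Definition E_fac (q r : Z -> C) (j : Z) : C := 1 + q j * r (j + 1)%Z.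

Definition u_seq (q r D E : Z -> C) (n : Z) : C := q n * E (n - 1)%Z / D n.
Definition v_seq (q r D E : Z -> C) (n : Z) : C :=
  (- r n + r (n + 1)%Z - q n * r n * r (n + 1)%Z) * D (n - 1)%Z / E n.
Definition p_seq (q r D E : Z -> C) (n : Z) : C :=
  (q n - q (n + 1)%Z - q n * q (n + 1)%Z * r (n + 1)%Z) * E (n - 1)%Z / D (n + 1)%Z.
Definition s_seq (q r D E : Z -> C) (n : Z) : C := r (n + 1)%Z * D n / E n.

Definition solves_Q (q r : Z -> C) (z : C) (X : Z -> C * C) : Prop :=
  forall n : Z,
    fst (X n) = z * fst (X (n + 1)%Z) + (z - / z) * q n * snd (X (n + 1)%Z) /\
    snd (X n) = z * r n * fst (X (n + 1)%Z)
                + (/ z + (z - / z) * q n * r n) * snd (X (n + 1)%Z).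

Definition solves_U (a b : Z -> C) (z : C) (X : Z -> C * C) : Prop :=
  forall n : Z,
    fst (X n) = z * fst (X (n + 1)%Z) + z * a n * snd (X (n + 1)%Z) /\
    snd (X n) = / z * b n * fst (X (n + 1)%Z) + / z * snd (X (n + 1)%Z).

Definition jost_psi (sol : (Z -> C * C) -> Prop) (z : C) (X : Z -> C * C) : Prop :=
  sol X /\ lim_pinf (fun n => fst (X n)) 0
        /\ lim_pinf (fun n => snd (X n) / Czpow z n) 1.
Definition jost_phi (sol : (Z -> C * C) -> Prop) (z : C) (X : Z -> C * C) : Prop :=
  sol X /\ lim_minf (fun n => fst (X n) / Czpow z (- n)) 1
        /\ lim_minf (fun n => snd (X n)) 0.
Definition jost_psibar (sol : (Z -> C * C) -> Prop) (z : C) (X : Z -> C * C) : Prop :=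
  sol X /\ lim_pinf (fun n => fst (X n) / Czpow z (- n)) 1
        /\ lim_pinf (fun n => snd (X n)) 0.
Definition jost_phibar (sol : (Z -> C * C) -> Prop) (z : C) (X : Z -> C * C) : Prop :=
  sol X /\ lim_minf (fun n => fst (X n)) 0
        /\ lim_minf (fun n => snd (X n) / Czpow z n) 1.

Definition cscale (c : C) (x : C * C) : C * C := (c * fst x, c * snd x).

Definition Gamma_app (r D E : Z -> C) (z : C) (n : Z) (x : C * C) : C * C :=
  ((1 - / (z * z)) / E (n - 1)%Z * fst x + 0 * snd x,
   r n / E (n - 1)%Z * fst x + / D (n - 1)%Z * snd x).

Definition Lambda_app (q r D E : Z -> C) (n : Z) (x : C * C) : C * C :=
  (/ E (n - 1)%Z * fst x + (- q n / D n) * snd x,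
   r n / E (n - 1)%Z * fst x + / D (n - 1)%Z * snd x).

(* Main.v *)
Require Import Defs.
From Stdlib Require Import Reals ZArith Lia Lra.
From Coquelicot Require Import Coquelicot.
Open Scope C_scope.

Definition dir (s:bool) (N n : Z) : Prop := if s then (N <= n)%Z else (n <= N)%Z.
Definition ev s (P : Z -> Prop) := exists N, forall n, dir s N n -> P n.
Definition tz s (f : Z -> C) := forall eps:R, (0<eps)%R -> ev s (fun n => (Cmod (f n) < eps)%R).
Definition tl s (f : Z -> C) l := tz s (fun n => f n - l).
Definition bnd s (f : Z -> C) := exists K:R, ev s (fun n => (Cmod (f n) <= K)%R).

Lemma ev_and s P Q : ev s P -> ev s Q -> ev s (fun n => P n /\ Q n).
Proof.
  intros [N1 H1] [N2 H2]. destruct s.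
  - exists (Z.max N1 N2). intros n Hn; simpl in *; split; [apply H1|apply H2]; simpl; lia.
  - exists (Z.min N1 N2). intros n Hn; simpl in *; split; [apply H1|apply H2]; simpl; lia.
Qed.

Lemma ev_impl s (P Q : Z -> Prop) : (forall n, P n -> Q n) -> ev s P -> ev s Q.
Proof. intros H [N HN]. exists N. auto. Qed.

Lemma ev_true s : ev s (fun _ => True).
Proof. exists 0%Z. auto. Qed.

Lemma tz_ext s f g : (forall n, f n = g n) -> tz s f -> tz s g.
Proof. intros E H eps He. generalize (H eps He). apply ev_impl. intros n h; rewrite <- E; exact h. Qed.

Lemma tz_ev_ext s f g : ev s (fun n => f n = g n) -> tz s f -> tz s g.
Proof. intros E H eps He. generalize (ev_and _ _ _ E (H eps He)). apply ev_impl.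
  intros n [h1 h2]; rewrite <- h1; exact h2. Qed.

Lemma tl_ext s f g l : (forall n, f n = g n) -> tl s f l -> tl s g l.
Proof. intros E; apply tz_ext; intros; rewrite E; auto. Qed.

Lemma tz_plus s f g : tz s f -> tz s g -> tz s (fun n => f n + g n).
Proof.
  intros Hf Hg eps He.
  generalize (ev_and _ _ _ (Hf (eps/2)%R ltac:(lra)) (Hg (eps/2)%R ltac:(lra))).
  apply ev_impl. intros n [h1 h2]. eapply Rle_lt_trans. apply Cmod_triangle. lra.
Qed.

Lemma tz_opp s f : tz s f -> tz s (fun n => - f n).
Proof. intros H eps He. generalize (H eps He). apply ev_impl. intros n h; rewrite Cmod_opp; auto. Qed.

Lemma tz_minus s f g : tz s f -> tz s g -> tz s (fun n => f n - g n).
Proof. intros; apply tz_plus; auto; apply tz_opp; auto. Qed.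

Lemma tz_mult_bnd s f g : tz s f -> bnd s g -> tz s (fun n => f n * g n).
Proof.
  intros Hf [K HK] eps He.
  assert (HK1 : (0 < Rabs K + 1)%R) by (generalize (Rabs_pos K); lra).
  generalize (ev_and _ _ _ (Hf (eps / (Rabs K + 1))%R ltac:(apply Rdiv_lt_0_compat; lra)) HK).
  apply ev_impl. intros n [h1 h2]. rewrite Cmod_mult.
  assert (Cmod (g n) <= Rabs K + 1)%R by (generalize (Rle_abs K); lra).
  assert (0 <= Cmod (g n))%R by apply Cmod_ge_0.
  assert (0 <= Cmod (f n))%R by apply Cmod_ge_0.
  apply Rle_lt_trans with (Cmod (f n) * (Rabs K + 1))%R.
  - apply Rmult_le_compat_l; lra.
  - replace eps with (eps / (Rabs K + 1) * (Rabs K + 1))%R by (field; lra).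
    apply Rmult_lt_compat_r; lra.
Qed.

Lemma bnd_const s c : bnd s (fun _ => c).
Proof. exists (Cmod c). exists 0%Z. intros; lra. Qed.

Lemma bnd_mult s f g : bnd s f -> bnd s g -> bnd s (fun n => f n * g n).
Proof.
  intros [K1 H1] [K2 H2]. exists (K1 * K2)%R.
  generalize (ev_and _ _ _ H1 H2). apply ev_impl. intros n [h1 h2].
  rewrite Cmod_mult. apply Rmult_le_compat; auto using Cmod_ge_0.
Qed.

Lemma tz_bnd_mult s f g : bnd s f -> tz s g -> tz s (fun n => f n * g n).
Proof. intros. apply tz_ext with (fun n => g n * f n). intros; apply Cmult_comm.
  apply tz_mult_bnd; auto. Qed.

Lemma bnd_of_tl s f l : tl s f l -> bnd s f.
Proof.
  intros H. exists (Cmod l + 1)%R. generalize (H 1%R Rlt_0_1). apply ev_impl.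
  intros n h. replace (f n) with ((f n - l) + l) by ring.
  eapply Rle_trans. apply Cmod_triangle. lra.
Qed.

Lemma bnd_of_tz s f : tz s f -> bnd s f.
Proof. intros H. apply (bnd_of_tl s f 0). apply tz_ext with f; auto. intros; ring. Qed.

Lemma tl_const s c : tl s (fun _ => c) c.
Proof. intros eps He. exists 0%Z. intros. replace (c - c) with (RtoC 0) by ring.
  rewrite Cmod_0; auto. Qed.

Lemma tz_zero s : tz s (fun _ => 0).
Proof. intros eps He. exists 0%Z. intros. rewrite Cmod_0; auto. Qed.

Lemma tl_tz s f : tl s f 0 -> tz s f.
Proof. apply tz_ext. intros; ring. Qed.

Lemma tz_tl s f : tz s f -> tl s f 0.
Proof. apply tz_ext. intros; ring. Qed.

Lemma tl_plus s f g a b : tl s f a -> tl s g b -> tl s (fun n => f n + g n) (a + b).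
Proof. intros H1 H2. eapply tz_ext. 2: apply (tz_plus _ _ _ H1 H2). intros; simpl; ring. Qed.

Lemma tl_minus s f g a b : tl s f a -> tl s g b -> tl s (fun n => f n - g n) (a - b).
Proof. intros H1 H2. eapply tz_ext. 2: apply (tz_minus _ _ _ H1 H2). intros; simpl; ring. Qed.

Lemma tl_mult s f g a b : tl s f a -> tl s g b -> tl s (fun n => f n * g n) (a * b).
Proof.
  intros H1 H2.
  assert (B := bnd_of_tl _ _ _ H2).
  eapply tz_ext. 2: apply (tz_plus _ _ _ (tz_mult_bnd _ _ _ H1 B) (tz_bnd_mult _ _ _ (bnd_const s a) H2)).
  intros; simpl; ring.
Qed.

Lemma tl_inv s f a : tl s f a -> a <> 0 -> tl s (fun n => / f n) (/ a).
Proof.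
  intros H Ha. apply Cmod_gt_0 in Ha as Ha'.
  assert (Hev : ev s (fun n => (Cmod a / 2 <= Cmod (f n))%R /\ f n <> 0)).
  { generalize (H (Cmod a / 2)%R ltac:(lra)). apply ev_impl. intros n h.
    assert (Cmod a <= Cmod (f n) + Cmod a / 2)%R.
    { replace a with (f n + - (f n - a)) at 1 by ring.
      eapply Rle_trans. apply Cmod_triangle. rewrite Cmod_opp. lra. }
    split. lra. intro E. rewrite E, Cmod_0 in H0. lra. }
  assert (Bd : bnd s (fun n => / f n)).
  { exists (2 / Cmod a)%R. generalize Hev. apply ev_impl. intros n [h1 h2].
    rewrite Cmod_inv by auto. apply Rmult_le_reg_l with (Cmod (f n) * Cmod a)%R.
    apply Cmod_gt_0 in h2. apply Rmult_lt_0_compat; lra.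
    apply Cmod_gt_0 in h2. field_simplify; lra. }
  apply tz_ev_ext with (fun n => (- / a) * (/ f n * (f n - a))).
  { generalize Hev. apply ev_impl. intros n [_ h2]. field. auto. }
  apply tz_bnd_mult. apply bnd_const. apply tz_bnd_mult; auto.
Qed.

Lemma tz_of_tl_diff s f g l : tl s f l -> tl s g l -> tz s (fun n => f n - g n).
Proof. intros H1 H2. apply tl_tz. eapply tz_ext. 2: apply (tl_minus _ _ _ _ _ H1 H2). intros; simpl; ring. Qed.

Lemma Cpow_mod1 z k : Cmod z = 1%R -> Cmod (Cpow z k) = 1%R.
Proof. intros H. rewrite Cmod_pow, H. apply pow1. Qed.

Lemma Cpow_nz z k : Cmod z = 1%R -> Cpow z k <> 0.
Proof. intros H E. generalize (Cpow_mod1 z k H). rewrite E, Cmod_0. lra. Qed.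

Lemma Czpow_mod1 z n : Cmod z = 1%R -> Cmod (Czpow z n) = 1%R.
Proof.
  intros H. destruct n; simpl.
  - apply Cmod_1.
  - apply Cpow_mod1; auto.
  - rewrite Cmod_inv by (apply Cpow_nz; auto). rewrite Cpow_mod1 by auto. apply Rinv_1.
Qed.

Lemma Czpow_nz z n : Cmod z = 1%R -> Czpow z n <> 0.
Proof. intros H E. generalize (Czpow_mod1 z n H). rewrite E, Cmod_0. lra. Qed.

Lemma Czpow_opp z n : Cmod z = 1%R -> Czpow z n * Czpow z (- n) = 1.
Proof.
  intros H. destruct n; simpl.
  - ring.
  - field. apply Cpow_nz; auto.
  - field. apply Cpow_nz; auto.
Qed.

Lemma bnd_Czpow s z (Hz : Cmod z = 1%R) (g : Z -> Z) : bnd s (fun n => Czpow z (g n)).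
Proof. exists 1%R. exists 0%Z. intros. rewrite Czpow_mod1; auto; lra. Qed.

Lemma bnd_Czpow_inv s z (Hz : Cmod z = 1%R) (g : Z -> Z) : bnd s (fun n => / Czpow z (g n)).
Proof. exists 1%R. exists 0%Z. intros. rewrite Cmod_inv by (apply Czpow_nz; auto).
  rewrite Czpow_mod1; auto; rewrite Rinv_1; lra. Qed.

Lemma lim_to_ev_p (g : Z -> R) : is_lim_seq (fun m => g (Z.of_nat m)) 0%R ->
  forall eps, (0 < eps)%R -> ev true (fun n => (Rabs (g n) < eps)%R).
Proof.
  intros H eps He. apply is_lim_seq_spec in H. destruct (H (mkposreal eps He)) as [N HN].
  exists (Z.of_nat N). intros n Hn. simpl in Hn. specialize (HN (Z.to_nat n) ltac:(lia)).
  rewrite Z2Nat.id in HN by lia. simpl in HN. rewrite Rminus_0_r in HN. auto.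
Qed.

Lemma lim_to_ev_m (g : Z -> R) : is_lim_seq (fun m => g (- Z.of_nat m)%Z) 0%R ->
  forall eps, (0 < eps)%R -> ev false (fun n => (Rabs (g n) < eps)%R).
Proof.
  intros H eps He. apply is_lim_seq_spec in H. destruct (H (mkposreal eps He)) as [N HN].
  exists (- Z.of_nat N)%Z. intros n Hn. simpl in Hn. specialize (HN (Z.to_nat (- n)) ltac:(lia)).
  rewrite Z2Nat.id in HN by lia. replace (- - n)%Z with n in HN by lia.
  simpl in HN. rewrite Rminus_0_r in HN. auto.
Qed.

Lemma lim_to_ev (g : Z -> R) s : is_lim_seq (fun m => g (Z.of_nat m)) 0%R ->
  is_lim_seq (fun m => g (- Z.of_nat m)%Z) 0%R ->
  forall eps, (0 < eps)%R -> ev s (fun n => (Rabs (g n) < eps)%R).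
Proof. destruct s; intros. apply lim_to_ev_p; auto. apply lim_to_ev_m; auto. Qed.

Lemma lim_pinf_tl f l : lim_pinf f l -> tl true f l.
Proof.
  intros H eps He. generalize (lim_to_ev_p (fun n => Cmod (f n - l)) H eps He).
  apply ev_impl. intros n h. rewrite Rabs_pos_eq in h; auto. apply Cmod_ge_0.
Qed.

Lemma lim_minf_tl f l : lim_minf f l -> tl false f l.
Proof.
  intros H eps He. generalize (lim_to_ev_m (fun n => Cmod (f n - l)) H eps He).
  apply ev_impl. intros n h. rewrite Rabs_pos_eq in h; auto. apply Cmod_ge_0.
Qed.

Lemma rd_tz f s : rapid_decay f -> tz s f.
Proof.
  intros H eps He. destruct (H 0%nat) as [H1 H2].
  assert (E: forall n, Cmod (f n) = (INR 0 ^ 0 * Cmod (f n))%R) by (intros; simpl; ring).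
  generalize (lim_to_ev (fun n => Cmod (f n)) s
    (is_lim_seq_ext _ _ _ (fun m => eq_sym (E _)) H1)
    (is_lim_seq_ext _ _ _ (fun m => eq_sym (E _)) H2) eps He).
  apply ev_impl. intros n h. rewrite Rabs_pos_eq in h; auto. apply Cmod_ge_0.
Qed.

Lemma rd_sq f s : rapid_decay f -> forall eps, (0 < eps)%R ->
  ev s (fun n => (IZR n * IZR n * Cmod (f n) < eps)%R).
Proof.
  intros H eps He. destruct (H 2%nat) as [H1 H2].
  assert (G : ev s (fun n => (Rabs (IZR n * IZR n * Cmod (f n)) < eps)%R)).
  { apply lim_to_ev; auto.
    - eapply is_lim_seq_ext. 2: exact H1. intros m. simpl. rewrite <- INR_IZR_INZ. ring.
    - eapply is_lim_seq_ext. 2: exact H2. intros m. simpl. rewrite opp_IZR, <- INR_IZR_INZ. ring. }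
  generalize G. apply ev_impl. intros n h. eapply Rle_lt_trans. 2: exact h. apply Rle_abs.
Qed.

Lemma ev_shift1 s P : ev s P -> ev s (fun j => P (j + 1)%Z).
Proof.
  intros [N HN]. destruct s.
  - exists N. intros n Hn. apply HN. simpl in *. lia.
  - exists (N - 1)%Z. intros n Hn. apply HN. simpl in *. lia.
Qed.

Definition sq_decay (f : Z -> C) := forall s eps, (0 < eps)%R ->
  ev s (fun j => (Cmod (f j - 1) * (IZR j * IZR j) <= eps)%R).

Lemma sq_decay_of (f : Z -> C) (q w : Z -> C) :
  (forall j, f j - 1 = q j * w j) ->
  (forall s eps, (0 < eps)%R -> ev s (fun n => (IZR n * IZR n * Cmod (q n) < eps)%R)) ->
  (forall s, ev s (fun j => (Cmod (w j) < 1)%R)) -> sq_decay f.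
Proof.
  intros E Hq Hw s eps He. generalize (ev_and _ _ _ (Hq s eps He) (Hw s)). apply ev_impl.
  intros n [h1 h2]. rewrite E, Cmod_mult.
  assert (0 <= Cmod (q n))%R by apply Cmod_ge_0.
  assert (0 <= Cmod (w n))%R by apply Cmod_ge_0.
  assert (0 <= IZR n * IZR n)%R by nra.
  nra.
Qed.

Lemma D_sq_decay q r : rapid_decay q -> rapid_decay r -> sq_decay (D_fac q r).
Proof.
  intros Hq Hr. apply sq_decay_of with q (fun j => - r j).
  - intros; unfold D_fac; ring.
  - intros; apply rd_sq; auto.
  - intros s. generalize (rd_tz r s Hr 1%R Rlt_0_1). apply ev_impl. intros n h. rewrite Cmod_opp; auto.
Qed.

Lemma E_sq_decay q r : rapid_decay q -> rapid_decay r -> sq_decay (E_fac q r).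
Proof.
  intros Hq Hr. apply sq_decay_of with q (fun j => r (j + 1)%Z).
  - intros; unfold E_fac; ring.
  - intros; apply rd_sq; auto.
  - intros s. apply (ev_shift1 s (fun j => Cmod (r j) < 1)%R). apply (rd_tz r s Hr 1%R Rlt_0_1).
Qed.

Lemma pprod_S f n N : pprod f n (S N) = f n * pprod f (n - 1)%Z N.
Proof.
  induction N.
  - simpl. replace (n - Z.of_nat 1)%Z with (n - 1)%Z by lia. ring.
  - change (pprod f n (S (S N))) with (pprod f n (S N) * f (n - Z.of_nat (S (S N)))%Z).
    rewrite IHN. change (pprod f (n-1) (S N)) with (pprod f (n-1) N * f (n - 1 - Z.of_nat (S N))%Z).
    replace (n - Z.of_nat (S (S N)))%Z with (n - 1 - Z.of_nat (S N))%Z by lia. ring.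
Qed.

Lemma nat_ev (u : nat -> R) : is_lim_seq u 0%R -> forall eps, (0 < eps)%R ->
  exists N0, forall N, (N0 <= N)%nat -> (Rabs (u N) < eps)%R.
Proof.
  intros H eps He. apply is_lim_seq_spec in H. destruct (H (mkposreal eps He)) as [N HN].
  exists N. intros. specialize (HN N0 H0). simpl in HN. rewrite Rminus_0_r in HN. auto.
Qed.

Lemma lp_ev f n P : is_left_prod f n P -> forall eps, (0 < eps)%R ->
  exists N0, forall N, (N0 <= N)%nat -> (Cmod (pprod f n N - P) < eps)%R.
Proof.
  intros H eps He. destruct (nat_ev _ H eps He) as [N0 HN]. exists N0. intros N HN'.
  specialize (HN N HN'). rewrite Rabs_pos_eq in HN; auto. apply Cmod_ge_0.
Qed.

Lemma small_le (a b : R) : (forall eps, (0 < eps)%R -> (a <= b + eps)%R) -> (a <= b)%R.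
Proof.
  intros H. destruct (Rle_lt_dec a b); auto. specialize (H ((a - b)/2)%R ltac:(lra)). lra.
Qed.

Lemma small_zero x : (forall eps, (0 < eps)%R -> (Cmod x <= eps)%R) -> x = 0.
Proof.
  intros H. apply Cmod_eq_0. apply Rle_antisym. 2: apply Cmod_ge_0.
  apply small_le. intros. rewrite Rplus_0_l. auto.
Qed.

Lemma Cminus_eq0 (a b : C) : a - b = 0 -> a = b.
Proof. intros H. replace a with ((a - b) + b) by ring. rewrite H. ring. Qed.

Lemma lp_rec f P : (forall n, is_left_prod f n (P n)) -> forall n, P n = f n * P (n - 1)%Z.
Proof.
  intros HP n. apply Cminus_eq0. apply small_zero. intros eps He.
  set (c := (1 + Cmod (f n))%R).
  assert (Hc : (0 < c)%R) by (unfold c; generalize (Cmod_ge_0 (f n)); lra).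
  destruct (lp_ev _ _ _ (HP n) (eps / c / 2)%R ltac:(apply Rdiv_lt_0_compat; [apply Rdiv_lt_0_compat|];lra)) as [N1 H1].
  destruct (lp_ev _ _ _ (HP (n-1)%Z) (eps / c / 2)%R ltac:(apply Rdiv_lt_0_compat; [apply Rdiv_lt_0_compat|];lra)) as [N2 H2].
  specialize (H1 (S (N1 + N2)) ltac:(lia)). specialize (H2 (N1 + N2)%nat ltac:(lia)).
  rewrite pprod_S in H1.
  replace (P n - f n * P (n - 1)%Z) with
    (- (f n * pprod f (n - 1)%Z (N1 + N2) - P n) + f n * (pprod f (n - 1)%Z (N1 + N2) - P (n - 1)%Z)) by ring.
  eapply Rle_trans. apply Cmod_triangle. rewrite Cmod_opp, Cmod_mult.
  assert (0 <= Cmod (f n))%R by apply Cmod_ge_0.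
  assert (Cmod (f n) * Cmod (pprod f (n - 1) (N1 + N2) - P (n - 1)%Z) <= c * (eps / c / 2))%R.
  { apply Rmult_le_compat; try apply Cmod_ge_0; [unfold c; lra | lra]. }
  assert (eps / c / 2 <= c * (eps / c / 2))%R.
  { rewrite <- (Rmult_1_l (eps / c / 2)) at 1. apply Rmult_le_compat_r.
    apply Rlt_le, Rdiv_lt_0_compat; [apply Rdiv_lt_0_compat|];lra. unfold c; lra. }
  replace (c * (eps / c / 2))%R with (eps / 2)%R in * by (field; lra). lra.
Qed.

Lemma prod_bound (f : Z -> C) n (x : nat -> R) N :
  (forall k, (k <= N)%nat -> (Cmod (f (n - Z.of_nat k)%Z - 1) <= x k)%R) ->
  (sum_f_R0 x N <= 1/2)%R -> (Cmod (pprod f n N - 1) <= 2 * sum_f_R0 x N)%R.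
Proof.
  induction N; intros Hx Hs.
  - simpl in *. specialize (Hx 0%nat (le_n 0)). replace (n - Z.of_nat 0)%Z with n in Hx by lia.
    generalize (Cmod_ge_0 (f n - 1)). lra.
  - assert (Hxp : forall k, (k <= S N)%nat -> (0 <= x k)%R).
    { intros k Hk. eapply Rle_trans. apply Cmod_ge_0. apply Hx; auto. }
    simpl in Hs. assert (0 <= x (S N))%R by auto.
    assert (IH : (Cmod (pprod f n N - 1) <= 2 * sum_f_R0 x N)%R) by (apply IHN; auto; lra).
    simpl sum_f_R0. change (pprod f n (S N)) with (pprod f n N * f (n - Z.of_nat (S N))%Z).
    set (P := pprod f n N) in *. set (a := f (n - Z.of_nat (S N))%Z) in *.
    assert (Ha : (Cmod (a - 1) <= x (S N))%R) by (apply Hx; auto).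
    replace (P * a - 1) with ((P - 1) * (a - 1) + (P - 1) + (a - 1)) by ring.
    eapply Rle_trans. apply Cmod_triangle. eapply Rle_trans. apply Rplus_le_compat_r. apply Cmod_triangle.
    rewrite Cmod_mult.
    assert (0 <= Cmod (P - 1))%R by apply Cmod_ge_0.
    assert (0 <= Cmod (a - 1))%R by apply Cmod_ge_0.
    assert (Cmod (P - 1) * Cmod (a - 1) <= 2 * sum_f_R0 x N * x (S N))%R by
      (apply Rmult_le_compat; auto).
    nra.
Qed.

Lemma tele_up (c : R) N : (1 <= c)%R ->
  sum_f_R0 (fun k => 1 / ((c + INR k) * (c + INR k + 1)))%R N = (1 / c - 1 / (c + INR N + 1))%R.
Proof.
  intros Hc. induction N.
  - simpl. field. lra.
  - rewrite tech5. rewrite IHN. rewrite S_INR. assert (0 <= INR N)%R by apply pos_INR. field. lra.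
Qed.

Lemma tele_down (b : R) N : (INR N + 2 <= b)%R ->
  sum_f_R0 (fun k => 1 / ((b - INR k - 1) * (b - INR k)))%R N = (1 / (b - INR N - 1) - 1 / b)%R.
Proof.
  induction N; intros Hb.
  - simpl in *. field. lra.
  - rewrite tech5. rewrite S_INR in *. rewrite IHN by lra. generalize (pos_INR N); intro. field. lra.
Qed.

Lemma lim_le_bound f n P (b : R) : is_left_prod f n P ->
  (forall N, (Cmod (pprod f n N - 1) <= b)%R) -> (Cmod (P - 1) <= b)%R.
Proof.
  intros H Hb. apply small_le. intros eps He. destruct (lp_ev _ _ _ H eps He) as [N0 HN].
  specialize (HN N0 (le_n _)). specialize (Hb N0).
  replace (P - 1) with (- (pprod f n N0 - P) + (pprod f n N0 - 1)) by ring.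
  eapply Rle_trans. apply Cmod_triangle. rewrite Cmod_opp. lra.
Qed.

Lemma sq_bound (a e j2 d : R) : (0 <= a)%R -> (a * j2 <= e)%R -> (0 < d)%R -> (d <= j2)%R ->
  (a <= (1 / d) * e)%R.
Proof.
  intros. assert (a * d <= e)%R by nra.
  replace a with ((1/d) * (a * d))%R by (field; lra).
  apply Rmult_le_compat_l. apply Rlt_le, Rdiv_lt_0_compat; lra. auto.
Qed.

Lemma tail_minus f P : sq_decay f -> (forall n, is_left_prod f n (P n)) ->
  forall eps, (0 < eps <= 1/4)%R -> ev false (fun n => (Cmod (P n - 1) <= 2 * eps)%R).
Proof.
  intros Hf HP eps He. destruct (Hf false eps ltac:(lra)) as [N0 HN0].
  exists (Z.min N0 (-2)). intros n Hn. simpl in Hn.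
  apply (lim_le_bound f n); auto. intros N.
  set (c := (- IZR n - 1)%R).
  assert (Hc : (1 <= c)%R).
  { assert (Hn2 : (n <= -2)%Z) by lia. apply IZR_le in Hn2. unfold c; lra. }
  assert (HS := tele_up c N Hc).
  assert (Hsum : (sum_f_R0 (fun k => 1 / ((c + INR k) * (c + INR k + 1)) * eps)%R N <= eps)%R).
  { rewrite <- scal_sum. rewrite HS.
    assert (0 < c + INR N + 1)%R by (generalize (pos_INR N); lra).
    assert (1 / c <= 1)%R. { unfold Rdiv. rewrite Rmult_1_l. rewrite <- Rinv_1. apply Rinv_le_contravar; lra. }
    assert (0 < 1 / (c + INR N + 1))%R by (apply Rdiv_lt_0_compat; lra).
    nra. }
  eapply Rle_trans. apply prod_bound with (x := fun k => (1 / ((c + INR k) * (c + INR k + 1)) * eps)%R).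
  - intros k Hk. specialize (HN0 (n - Z.of_nat k)%Z ltac:(simpl; lia)).
    rewrite minus_IZR, <- INR_IZR_INZ in HN0.
    apply sq_bound with ((IZR n - INR k) * (IZR n - INR k))%R; auto using Cmod_ge_0.
    + generalize (pos_INR k); intros; apply Rmult_lt_0_compat; lra.
    + unfold c in *. generalize (pos_INR k); intros. nra.
  - lra.
  - lra.
Qed.

Lemma tail_plus_bound f (M : Z) (eps : R) : (0 < eps <= 1/4)%R -> (2 <= M)%Z ->
  (forall j, (M <= j)%Z -> (Cmod (f j - 1) * (IZR j * IZR j) <= eps)%R) ->
  forall n K, (M <= n - Z.of_nat K)%Z -> (Cmod (pprod f n K - 1) <= 2 * eps)%R.
Proof.
  intros He HM Hj n K HK.
  set (b := IZR n).
  assert (Hb : (INR K + 2 <= b)%R).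
  { unfold b. rewrite INR_IZR_INZ. apply IZR_le in HK. apply IZR_le in HM.
    rewrite minus_IZR in HK. lra. }
  assert (HS := tele_down b K Hb).
  assert (Hsum : (sum_f_R0 (fun k => 1 / ((b - INR k - 1) * (b - INR k)) * eps)%R K <= eps)%R).
  { rewrite <- scal_sum. rewrite HS.
    assert (1 / (b - INR K - 1) <= 1)%R. { unfold Rdiv. rewrite Rmult_1_l. rewrite <- Rinv_1. apply Rinv_le_contravar; lra. }
    assert (0 < 1 / b)%R by (apply Rdiv_lt_0_compat; generalize (pos_INR K); lra).
    nra. }
  eapply Rle_trans. apply prod_bound with (x := fun k => (1 / ((b - INR k - 1) * (b - INR k)) * eps)%R).
  - intros k Hk. specialize (Hj (n - Z.of_nat k)%Z ltac:(lia)).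
    rewrite minus_IZR, <- INR_IZR_INZ in Hj.
    assert (INR k <= INR K)%R by (apply le_INR; auto).
    apply sq_bound with ((IZR n - INR k) * (IZR n - INR k))%R; auto using Cmod_ge_0.
    + unfold b in *. apply Rmult_lt_0_compat; lra.
    + unfold b in *. nra.
  - lra.
  - lra.
Qed.

Lemma Cmult_nz (a b : C) : a <> 0 -> b <> 0 -> a * b <> 0.
Proof.
  intros Ha Hb E. apply Cmod_gt_0 in Ha. apply Cmod_gt_0 in Hb.
  assert (Cmod (a * b) = 0%R) by (rewrite E; apply Cmod_0).
  rewrite Cmod_mult in H. nra.
Qed.

Lemma Cmod_rev (a b : C) : (Cmod a - Cmod b <= Cmod (a - b))%R.
Proof. replace a with ((a - b) + b) at 1 by ring. generalize (Cmod_triangle (a - b) b). lra. Qed.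

Lemma pprod_nz (f : Z -> C) n K : (forall j, f j <> 0) -> pprod f n K <> 0.
Proof. intros H. induction K; simpl; auto. apply Cmult_nz; auto. Qed.

Lemma lp_shiftK f P : (forall n, is_left_prod f n (P n)) ->
  forall K n, P n = pprod f n K * P (n - Z.of_nat K - 1)%Z.
Proof.
  intros HP. induction K; intros n.
  - simpl. rewrite (lp_rec f P HP n). f_equal. f_equal. lia.
  - rewrite IHK. change (pprod f n (S K)) with (pprod f n K * f (n - Z.of_nat (S K))%Z).
    rewrite (lp_rec f P HP (n - Z.of_nat K - 1)%Z).
    replace (n - Z.of_nat K - 1)%Z with (n - Z.of_nat (S K))%Z by lia.
    replace (n - Z.of_nat (S K) - 1)%Z with (n - Z.of_nat (S K) - 1)%Z by lia. ring.
Qed.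

Lemma ev_witness s P : ev s P -> exists n, P n.
Proof. intros [N HN]. exists N. apply HN. destruct s; simpl; lia. Qed.

Lemma lp_minus f P : sq_decay f -> (forall n, is_left_prod f n (P n)) -> tl false P 1.
Proof.
  intros Hf HP eps He.
  set (e := Rmin (eps/4) (1/4)).
  assert (e <= eps/4)%R by apply Rmin_l. assert (e <= 1/4)%R by apply Rmin_r.
  assert (0 < e)%R by (apply Rmin_glb_lt; lra).
  generalize (tail_minus f P Hf HP e ltac:(lra)). apply ev_impl. intros; lra.
Qed.

Lemma lp_nz (f P : Z -> C) : sq_decay f -> (forall j, f j <> 0) -> (forall n, is_left_prod f n (P n)) ->
  forall n, P n <> 0.
Proof.
  intros Hf Hnz HP n.
  destruct (tail_minus f P Hf HP (1/4)%R ltac:(lra)) as [N1 HN1].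
  assert (Hlow : forall m, (m <= N1)%Z -> P m <> 0).
  { intros m Hm E. specialize (HN1 m Hm). rewrite E in HN1.
    replace (0 - 1) with (- (1)) in HN1 by ring. rewrite Cmod_opp, Cmod_1 in HN1. lra. }
  destruct (Z_le_gt_dec n N1). auto.
  rewrite (lp_shiftK f P HP (Z.to_nat (n - N1 - 1)) n).
  apply Cmult_nz. apply pprod_nz; auto. apply Hlow. lia.
Qed.

Lemma lp_inf_nz (f P : Z -> C) Pinf : sq_decay f -> (forall j, f j <> 0) -> (forall n, is_left_prod f n (P n)) ->
  tl true P Pinf -> Pinf <> 0.
Proof.
  intros Hf Hnz HP Hinf E.
  destruct (Hf true (1/4)%R ltac:(lra)) as [N0 HN0].
  set (M := Z.max N0 2).
  assert (HB := tail_plus_bound f M (1/4)%R ltac:(lra) ltac:(unfold M; lia)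
     (fun j Hj => HN0 j ltac:(unfold M in Hj; simpl; lia))).
  assert (Hc : (0 < Cmod (P (M - 1)%Z))%R) by (apply Cmod_gt_0; apply lp_nz with f; auto).
  assert (Hge : forall n, (M <= n)%Z -> (Cmod (P (M - 1)%Z) / 2 <= Cmod (P n))%R).
  { intros n Hn. rewrite (lp_shiftK f P HP (Z.to_nat (n - M)) n).
    replace (n - Z.of_nat (Z.to_nat (n - M)) - 1)%Z with (M - 1)%Z by lia.
    specialize (HB n (Z.to_nat (n - M)) ltac:(lia)).
    rewrite Cmod_mult.
    assert (1 <= Cmod (pprod f n (Z.to_nat (n - M))) + 1/2)%R.
    { generalize (Cmod_rev 1 (pprod f n (Z.to_nat (n - M)))). rewrite Cmod_1.
      replace (1 - pprod f n (Z.to_nat (n - M))) with (- (pprod f n (Z.to_nat (n - M)) - 1)) by ring.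
      rewrite Cmod_opp. lra. }
    nra. }
  subst Pinf.
  destruct (ev_witness _ _ (ev_and _ _ _ (Hinf (Cmod (P (M - 1)%Z) / 2)%R ltac:(lra))
     (ex_intro _ M (fun n (h : dir true M n) => h)))) as [n [h1 h2]].
  simpl in h2. specialize (Hge n h2). replace (P n - 0) with (P n) in h1 by ring. lra.
Qed.

Definition W (X Y : C * C) : C := fst X * snd Y - snd X * fst Y.

Lemma W_step (q r : Z -> C) (z : C) X Y : z <> 0 -> solves_Q q r z X -> solves_Q q r z Y ->
  forall n, W (X n) (Y n) = W (X (n + 1)%Z) (Y (n + 1)%Z).
Proof.
  intros Hz HX HY n. destruct (HX n) as [h1 h2]. destruct (HY n) as [h3 h4].
  unfold W. rewrite h1, h2, h3, h4. field. auto.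
Qed.

Lemma const_Z (g : Z -> C) : (forall n, g n = g (n + 1)%Z) -> forall n, g n = g 0%Z.
Proof.
  intros H n. induction n using Z.peano_ind.
  - auto.
  - rewrite <- Z.add_1_r, <- H. auto.
  - rewrite <- IHn. rewrite (H (Z.pred n)). f_equal. lia.
Qed.

Lemma const_lim s (g : Z -> C) c L : (forall n, g n = c) -> tl s g L -> c = L.
Proof.
  intros Hg Hl. apply Cminus_eq0. apply small_zero. intros eps He.
  destruct (ev_witness _ _ (Hl eps He)) as [n h]. rewrite Hg in h. lra.
Qed.

Lemma W_lim s (q r : Z -> C) (z : C) X Y L : z <> 0 -> solves_Q q r z X -> solves_Q q r z Y ->
  tl s (fun n => W (X n) (Y n)) L -> forall n, W (X n) (Y n) = L.
Proof.
  intros Hz HX HY Hl n.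
  assert (Hc := const_Z (fun n => W (X n) (Y n)) (W_step q r z X Y Hz HX HY)).
  simpl in Hc. rewrite Hc. apply (const_lim s (fun n => W (X n) (Y n))); auto.
Qed.

Lemma uniq s (q r : Z -> C) (z : C) A B X c : z <> 0 -> solves_Q q r z A -> solves_Q q r z B -> solves_Q q r z X ->
  tz s (fun n => W (A n) (X n)) -> tz s (fun n => W (X n) (B n)) ->
  tl s (fun n => W (A n) (B n)) c -> c <> 0 -> forall n, fst (X n) = 0 /\ snd (X n) = 0.
Proof.
  intros Hz HA HB HX H1 H2 H3 Hc n.
  assert (E1 := W_lim s q r z A X 0 Hz HA HX (tz_tl _ _ H1) n).
  assert (E2 := W_lim s q r z X B 0 Hz HX HB (tz_tl _ _ H2) n).
  assert (E3 := W_lim s q r z A B c Hz HA HB H3 n).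
  unfold W in *. destruct (A n) as [a1 a2]; destruct (B n) as [b1 b2]; destruct (X n) as [x1 x2].
  simpl in *.
  assert (F1 : c * x1 = (x1 * b2 - x2 * b1) * a1 + (a1 * x2 - a2 * x1) * b1) by (rewrite <- E3; ring).
  assert (F2 : c * x2 = (x1 * b2 - x2 * b1) * a2 + (a1 * x2 - a2 * x1) * b2) by (rewrite <- E3; ring).
  rewrite E1, E2 in F1, F2.
  split.
  - replace x1 with (c * x1 / c) by (field; auto). rewrite F1. field. auto.
  - replace x2 with (c * x2 / c) by (field; auto). rewrite F2. field. auto.
Qed.

Definition likeA s (z : C) (X : Z -> C * C) :=
  tz s (fun n => fst (X n)) /\ tl s (fun n => snd (X n) / Czpow z n) 1.
Definition likeB s (z : C) (X : Z -> C * C) :=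
  tl s (fun n => fst (X n) / Czpow z (- n)) 1 /\ tz s (fun n => snd (X n)).

Lemma likeA_bnd s (z : C) X : Cmod z = 1%R -> likeA s z X -> bnd s (fun n => fst (X n)) /\ bnd s (fun n => snd (X n)).
Proof.
  intros Hz [H1 H2]. split. apply bnd_of_tz; auto.
  destruct (bnd_mult s _ _ (bnd_of_tl _ _ _ H2) (bnd_Czpow s z Hz (fun n => n))) as [K HK].
  exists K. generalize HK. apply ev_impl. intros n h. simpl in h.
  replace (snd (X n)) with (snd (X n) / Czpow z n * Czpow z n) by (field; apply Czpow_nz; auto). auto.
Qed.

Lemma likeB_bnd s (z : C) X : Cmod z = 1%R -> likeB s z X -> bnd s (fun n => fst (X n)) /\ bnd s (fun n => snd (X n)).
Proof.
  intros Hz [H1 H2]. split. 2: apply bnd_of_tz; auto.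
  destruct (bnd_mult s _ _ (bnd_of_tl _ _ _ H1) (bnd_Czpow s z Hz (fun n => (- n)%Z))) as [K HK].
  exists K. generalize HK. apply ev_impl. intros n h. simpl in h.
  replace (fst (X n)) with (fst (X n) / Czpow z (- n) * Czpow z (- n)) by (field; apply Czpow_nz; auto). auto.
Qed.

Definition csub (X Y : Z -> C * C) := fun n => (fst (X n) - fst (Y n), snd (X n) - snd (Y n)).

Lemma csub_sol (q r : Z -> C) (z : C) X Y : solves_Q q r z X -> solves_Q q r z Y -> solves_Q q r z (csub X Y).
Proof.
  intros HX HY n. unfold csub; simpl. destruct (HX n) as [h1 h2]; destruct (HY n) as [h3 h4].
  rewrite h1, h2, h3, h4. split; ring.
Qed.

Lemma diffA s (z : C) X Y : Cmod z = 1%R -> likeA s z X -> likeA s z Y ->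
  tz s (fun n => fst (csub X Y n)) /\ tz s (fun n => snd (csub X Y n)).
Proof.
  intros Hz [H1 H2] [H3 H4]. unfold csub; simpl. split.
  - apply tz_minus; auto.
  - apply tz_ext with (fun n => (snd (X n) / Czpow z n - snd (Y n) / Czpow z n) * Czpow z n).
    { intros n. field. apply Czpow_nz; auto. }
    apply tz_mult_bnd. apply tz_of_tl_diff with (RtoC 1); auto. apply bnd_Czpow; auto.
Qed.

Lemma diffB s (z : C) X Y : Cmod z = 1%R -> likeB s z X -> likeB s z Y ->
  tz s (fun n => fst (csub X Y n)) /\ tz s (fun n => snd (csub X Y n)).
Proof.
  intros Hz [H1 H2] [H3 H4]. unfold csub; simpl. split.
  - apply tz_ext with (fun n => (fst (X n) / Czpow z (- n) - fst (Y n) / Czpow z (- n)) * Czpow z (- n)).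
    { intros n. field. apply Czpow_nz; auto. }
    apply tz_mult_bnd. apply tz_of_tl_diff with (RtoC 1); auto. apply (bnd_Czpow s z Hz (fun n => (- n)%Z)).
  - apply tz_minus; auto.
Qed.

Lemma tl_eq s f a b : tl s f a -> a = b -> tl s f b.
Proof. intros H E; subst; auto. Qed.

Lemma W_AB s (z : C) A B : Cmod z = 1%R -> likeA s z A -> likeB s z B -> tl s (fun n => W (A n) (B n)) (-1).
Proof.
  intros Hz [H1 H2] [H3 H4].
  apply tl_ext with (fun n => fst (A n) * snd (B n) - (snd (A n) / Czpow z n) * (fst (B n) / Czpow z (- n))).
  { intros n. unfold W. f_equal.
    replace (snd (A n) * fst (B n)) with
      ((snd (A n) / Czpow z n) * (fst (B n) / Czpow z (- n)) * (Czpow z n * Czpow z (- n)))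
      by (field; split; apply Czpow_nz; auto).
    rewrite Czpow_opp by auto. ring. }
  apply tl_eq with (0 * 0 - 1 * 1). 2: ring.
  apply tl_minus; apply tl_mult; auto; apply tz_tl; auto.
Qed.

Lemma final_unique s (q r : Z -> C) (z : C) A B X0 Y : Cmod z = 1%R ->
  solves_Q q r z A -> solves_Q q r z B -> solves_Q q r z X0 -> solves_Q q r z Y ->
  likeA s z A -> likeB s z B ->
  tz s (fun n => fst (csub X0 Y n)) -> tz s (fun n => snd (csub X0 Y n)) ->
  forall n, X0 n = Y n.
Proof.
  intros Hz HA HB HX HY LA LB T1 T2 n.
  assert (Hz0 : z <> 0). { intros E. rewrite E, Cmod_0 in Hz. lra. }
  destruct (likeA_bnd s z A Hz LA) as [BA1 BA2].
  destruct (likeB_bnd s z B Hz LB) as [BB1 BB2].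
  assert (U : forall m, fst (csub X0 Y m) = 0 /\ snd (csub X0 Y m) = 0).
  { refine (uniq s q r z A B (csub X0 Y) (-1) Hz0 HA HB (csub_sol q r z X0 Y HX HY) _ _ _ _).
  - unfold W. apply tz_minus; apply tz_bnd_mult; auto.
  - unfold W. apply tz_minus; apply tz_mult_bnd; auto.
  - apply (W_AB s z); auto.
  - intros E. apply (f_equal fst) in E. simpl in E. lra. }
  destruct (U n) as [U1 U2].
  { unfold csub in U1, U2; simpl in U1, U2.
    destruct (X0 n) as [a b]; destruct (Y n) as [c d]; simpl in *.
    apply Cminus_eq0 in U1. apply Cminus_eq0 in U2. subst; auto. }
Qed.

Lemma Gamma_sol (q r D E : Z -> C) (z c : C) X : z <> 0 ->
  (forall n, D n = D_fac q r n * D (n - 1)%Z) -> (forall n, E n = E_fac q r n * E (n - 1)%Z) ->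
  (forall n, D n <> 0) -> (forall n, E n <> 0) ->
  (forall n : Z, 1 - q n * r n <> 0) -> (forall n : Z, 1 + q n * r (n + 1)%Z <> 0) ->
  solves_U (u_seq q r D E) (v_seq q r D E) z X ->
  solves_Q q r z (fun n => cscale c (Gamma_app r D E z n (X n))).
Proof.
  intros Hz HDr HEr HDn HEn HD0 HE0 HX n. destruct (HX n) as [h1 h2].
  unfold cscale, Gamma_app; simpl. rewrite h1, h2. replace (n + 1 - 1)%Z with n by lia.
  unfold u_seq, v_seq. rewrite (HDr n), (HEr n). unfold D_fac, E_fac.
  pose proof (HDn (n - 1)%Z). pose proof (HEn (n - 1)%Z). pose proof (HD0 n). pose proof (HE0 n).
  split; field; repeat split; auto.
Qed.

Lemma Lambda_sol (q r D E : Z -> C) (z c : C) X : z <> 0 ->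
  (forall n, D n = D_fac q r n * D (n - 1)%Z) -> (forall n, E n = E_fac q r n * E (n - 1)%Z) ->
  (forall n, D n <> 0) -> (forall n, E n <> 0) ->
  (forall n : Z, 1 - q n * r n <> 0) -> (forall n : Z, 1 + q n * r (n + 1)%Z <> 0) ->
  solves_U (p_seq q r D E) (s_seq q r D E) z X ->
  solves_Q q r z (fun n => cscale c (Lambda_app q r D E n (X n))).
Proof.
  intros Hz HDr HEr HDn HEn HD0 HE0 HX n. destruct (HX n) as [h1 h2].
  unfold cscale, Lambda_app; simpl. rewrite h1, h2.
  unfold p_seq, s_seq. rewrite (HDr (n + 1)%Z). replace (n + 1 - 1)%Z with n by lia.
  rewrite (HDr n), (HEr n). unfold D_fac, E_fac.
  pose proof (HDn (n - 1)%Z). pose proof (HEn (n - 1)%Z). pose proof (HD0 n). pose proof (HE0 n).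
  pose proof (HD0 (n + 1)%Z).
  split; field; repeat split; auto.
Qed.

Lemma GA (s : bool) (q r D E : Z -> C) (z d e : C)
  (Hz : Cmod z = 1%R) (Hq : tz s q) (Hr : tz s r)
  (HEl : tl s (fun n => E (n - 1)%Z) e) (HDl : tl s (fun n => D (n - 1)%Z) d)
  (HDl0 : tl s D d) (He : e <> 0) (Hd : d <> 0)  c X : likeA s z X -> c = d -> likeA s z (fun n => cscale c (Gamma_app r D E z n (X n))).
Proof.
  intros LA Hc. destruct (likeA_bnd s z X Hz LA) as [B1 B2]. destruct LA as [A1 A2].
  unfold cscale, Gamma_app; split; simpl.
  - apply tl_tz. apply tl_ext with (fun n => (c * (1 - / (z * z))) * / E (n - 1)%Z * fst (X n)).
    { intros; unfold Cdiv; ring. }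
    apply tl_eq with ((c * (1 - / (z * z))) * / e * 0). 2: ring.
    apply tl_mult. apply tl_mult. apply tl_const. apply tl_inv; auto. apply tz_tl; auto.
  - apply tl_ext with (fun n => c * (r n * / E (n - 1)%Z * (fst (X n) * / Czpow z n)
        + / D (n - 1)%Z * (snd (X n) / Czpow z n))).
    { intros; unfold Cdiv; ring. }
    apply tl_eq with (c * (0 * / e * 0 + / d * 1)). 2: subst; field; auto.
    apply tl_mult. apply tl_const. apply tl_plus. apply tl_mult. apply tl_mult.
    apply tz_tl; auto. apply tl_inv; auto.
    apply tz_tl. apply tz_mult_bnd; auto. apply bnd_Czpow_inv; auto.
    apply tl_mult. apply tl_inv; auto. auto.
Qed.

Lemma LA (s : bool) (q r D E : Z -> C) (z d e : C)
  (Hz : Cmod z = 1%R) (Hq : tz s q) (Hr : tz s r)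
  (HEl : tl s (fun n => E (n - 1)%Z) e) (HDl : tl s (fun n => D (n - 1)%Z) d)
  (HDl0 : tl s D d) (He : e <> 0) (Hd : d <> 0)  c X : likeA s z X -> c = d -> likeA s z (fun n => cscale c (Lambda_app q r D E n (X n))).
Proof.
  intros LA Hc. destruct (likeA_bnd s z X Hz LA) as [B1 B2]. destruct LA as [A1 A2].
  unfold cscale, Lambda_app; split; simpl.
  - apply tl_tz. apply tl_ext with (fun n => c * / E (n - 1)%Z * fst (X n) + (- c) * / D n * (q n * snd (X n))).
    { intros; unfold Cdiv; ring. }
    apply tl_eq with (c * / e * 0 + (- c) * / d * 0). 2: ring.
    apply tl_plus; apply tl_mult. apply tl_mult. apply tl_const. apply tl_inv; auto. apply tz_tl; auto.
    apply tl_mult. apply tl_const. apply tl_inv; auto. apply tz_tl. apply tz_mult_bnd; auto.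
  - apply tl_ext with (fun n => c * (r n * / E (n - 1)%Z * (fst (X n) * / Czpow z n)
        + / D (n - 1)%Z * (snd (X n) / Czpow z n))).
    { intros; unfold Cdiv; ring. }
    apply tl_eq with (c * (0 * / e * 0 + / d * 1)). 2: subst; field; auto.
    apply tl_mult. apply tl_const. apply tl_plus. apply tl_mult. apply tl_mult.
    apply tz_tl; auto. apply tl_inv; auto.
    apply tz_tl. apply tz_mult_bnd; auto. apply bnd_Czpow_inv; auto.
    apply tl_mult. apply tl_inv; auto. auto.
Qed.

Lemma GB (s : bool) (q r D E : Z -> C) (z d e : C)
  (Hz : Cmod z = 1%R) (Hq : tz s q) (Hr : tz s r)
  (HEl : tl s (fun n => E (n - 1)%Z) e) (HDl : tl s (fun n => D (n - 1)%Z) d)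
  (HDl0 : tl s D d) (He : e <> 0) (Hd : d <> 0)  c X : likeB s z X -> c * (1 - / (z * z)) = e ->
  likeB s z (fun n => cscale c (Gamma_app r D E z n (X n))).
Proof.
  intros LB Hc. destruct (likeB_bnd s z X Hz LB) as [B1 B2]. destruct LB as [A1 A2].
  unfold cscale, Gamma_app; split; simpl.
  - apply tl_ext with (fun n => (c * (1 - / (z * z))) * / E (n - 1)%Z * (fst (X n) / Czpow z (- n))).
    { intros; unfold Cdiv; ring. }
    apply tl_eq with ((c * (1 - / (z * z))) * / e * 1). 2: rewrite Hc; field; auto.
    apply tl_mult. apply tl_mult. apply tl_const. apply tl_inv; auto. auto.
  - apply tl_tz. apply tl_ext with (fun n => c * / E (n - 1)%Z * (r n * fst (X n)) + c * / D (n - 1)%Z * snd (X n)).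
    { intros; unfold Cdiv; ring. }
    apply tl_eq with (c * / e * 0 + c * / d * 0). 2: ring.
    apply tl_plus; apply tl_mult. apply tl_mult. apply tl_const. apply tl_inv; auto.
    apply tz_tl. apply tz_mult_bnd; auto.
    apply tl_mult. apply tl_const. apply tl_inv; auto. apply tz_tl; auto.
Qed.

Lemma LB (s : bool) (q r D E : Z -> C) (z d e : C)
  (Hz : Cmod z = 1%R) (Hq : tz s q) (Hr : tz s r)
  (HEl : tl s (fun n => E (n - 1)%Z) e) (HDl : tl s (fun n => D (n - 1)%Z) d)
  (HDl0 : tl s D d) (He : e <> 0) (Hd : d <> 0)  c X : likeB s z X -> c = e ->
  likeB s z (fun n => cscale c (Lambda_app q r D E n (X n))).
Proof.
  intros LB Hc. destruct (likeB_bnd s z X Hz LB) as [B1 B2]. destruct LB as [A1 A2].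
  unfold cscale, Lambda_app; split; simpl.
  - apply tl_ext with (fun n => c * / E (n - 1)%Z * (fst (X n) / Czpow z (- n))
       + (- c) * / D n * (q n * (snd (X n) * / Czpow z (- n)))).
    { intros; unfold Cdiv; ring. }
    apply tl_eq with (c * / e * 1 + (- c) * / d * 0). 2: subst; field; auto.
    apply tl_plus; apply tl_mult. apply tl_mult. apply tl_const. apply tl_inv; auto. auto.
    apply tl_mult. apply tl_const. apply tl_inv; auto. apply tz_tl. apply tz_mult_bnd; auto.
    apply (bnd_mult s _ _ B2 (bnd_Czpow_inv s z Hz (fun n => (- n)%Z))).
  - apply tl_tz. apply tl_ext with (fun n => c * / E (n - 1)%Z * (r n * fst (X n)) + c * / D (n - 1)%Z * snd (X n)).
    { intros; unfold Cdiv; ring. }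
    apply tl_eq with (c * / e * 0 + c * / d * 0). 2: ring.
    apply tl_plus; apply tl_mult. apply tl_mult. apply tl_const. apply tl_inv; auto.
    apply tz_tl. apply tz_mult_bnd; auto.
    apply tl_mult. apply tl_const. apply tl_inv; auto. apply tz_tl; auto.
Qed.


Lemma ev_shiftm1 s P : ev s P -> ev s (fun j => P (j - 1)%Z).
Proof.
  intros [N HN]. destruct s.
  - exists (N + 1)%Z. intros n Hn. apply HN. simpl in *. lia.
  - exists N. intros n Hn. apply HN. simpl in *. lia.
Qed.

Lemma tl_shift s f l : tl s f l -> tl s (fun n => f (n - 1)%Z) l.
Proof. intros H eps He. apply (ev_shiftm1 s (fun n => Cmod (f n - l) < eps)%R). apply H; auto. Qed.

Lemma cscale1 x : cscale 1 x = x.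
Proof. destruct x; unfold cscale; simpl; f_equal; ring. Qed.

Theorem theorem3p3
  (q r : Z -> C)
  (Hq : rapid_decay q) (Hr : rapid_decay r)
  (HD0 : forall n : Z, 1 - q n * r n <> 0)
  (HE0 : forall n : Z, 1 + q n * r (n + 1)%Z <> 0)
  (D E : Z -> C) (Dinf Einf : C)
  (HD : forall n : Z, is_left_prod (D_fac q r) n (D n))
  (HE : forall n : Z, is_left_prod (E_fac q r) n (E n))
  (HDinf : lim_pinf D Dinf) (HEinf : lim_pinf E Einf)
  (z : C) (Hz : Cmod z = 1%R) (Hz2 : z * z <> 1)
  (psi_qr phi_qr psib_qr phib_qr : Z -> C * C)
  (psi_uv phi_uv psib_uv phib_uv : Z -> C * C)
  (psi_ps phi_ps psib_ps phib_ps : Z -> C * C)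
  (H1 : jost_psi (solves_Q q r z) z psi_qr)
  (H2 : jost_phi (solves_Q q r z) z phi_qr)
  (H3 : jost_psibar (solves_Q q r z) z psib_qr)
  (H4 : jost_phibar (solves_Q q r z) z phib_qr)
  (H5 : jost_psi (solves_U (u_seq q r D E) (v_seq q r D E) z) z psi_uv)
  (H6 : jost_phi (solves_U (u_seq q r D E) (v_seq q r D E) z) z phi_uv)
  (H7 : jost_psibar (solves_U (u_seq q r D E) (v_seq q r D E) z) z psib_uv)
  (H8 : jost_phibar (solves_U (u_seq q r D E) (v_seq q r D E) z) z phib_uv)
  (H9 : jost_psi (solves_U (p_seq q r D E) (s_seq q r D E) z) z psi_ps)
  (H10 : jost_phi (solves_U (p_seq q r D E) (s_seq q r D E) z) z phi_ps)
  (H11 : jost_psibar (solves_U (p_seq q r D E) (s_seq q r D E) z) z psib_ps)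
  (H12 : jost_phibar (solves_U (p_seq q r D E) (s_seq q r D E) z) z phib_ps) :
  forall n : Z,
    psi_qr n = cscale Dinf (Gamma_app r D E z n (psi_uv n)) /\
    psi_qr n = cscale Dinf (Lambda_app q r D E n (psi_ps n)) /\
    phi_qr n = cscale (/ (1 - / (z * z))) (Gamma_app r D E z n (phi_uv n)) /\
    phi_qr n = Lambda_app q r D E n (phi_ps n) /\
    psib_qr n = cscale (Einf / (1 - / (z * z))) (Gamma_app r D E z n (psib_uv n)) /\
    psib_qr n = cscale Einf (Lambda_app q r D E n (psib_ps n)) /\
    phib_qr n = Gamma_app r D E z n (phib_uv n) /\
    phib_qr n = Lambda_app q r D E n (phib_ps n).
Proof.
  intros n.
  assert (Hz0 : z <> 0). { intros E0. rewrite E0, Cmod_0 in Hz. lra. }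
  assert (Hzz : 1 - / (z * z) <> 0).
  { intros E0. apply Hz2. assert (F : z * z * (1 - / (z * z)) = z * z - 1) by (field; auto).
    rewrite E0 in F. apply Cminus_eq0. rewrite <- F. ring. }
  assert (HDr := lp_rec (D_fac q r) D HD).
  assert (HEr := lp_rec (E_fac q r) E HE).
  assert (sqD := D_sq_decay q r Hq Hr). assert (sqE := E_sq_decay q r Hq Hr).
  assert (HDnz : forall n, D n <> 0) by (apply (lp_nz (D_fac q r)); auto).
  assert (HEnz : forall n, E n <> 0) by (apply (lp_nz (E_fac q r)); auto).
  assert (HDip := lim_pinf_tl _ _ HDinf). assert (HEip := lim_pinf_tl _ _ HEinf).
  assert (HDi0 : Dinf <> 0) by (apply (lp_inf_nz (D_fac q r) D); auto).
  assert (HEi0 : Einf <> 0) by (apply (lp_inf_nz (E_fac q r) E); auto).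
  assert (HDm := lp_minus _ _ sqD HD). assert (HEm := lp_minus _ _ sqE HE).
  assert (HDms := tl_shift _ _ _ HDm). assert (HEms := tl_shift _ _ _ HEm).
  assert (HDps := tl_shift _ _ _ HDip). assert (HEps := tl_shift _ _ _ HEip).
  assert (qp := rd_tz q true Hq). assert (qm := rd_tz q false Hq).
  assert (rp := rd_tz r true Hr). assert (rm := rd_tz r false Hr).
  assert (R1 : (1 : C) <> 0). { intros E0. apply (f_equal fst) in E0. simpl in E0. lra. }
  destruct H1 as [S1 [L1a L1b]]. destruct H2 as [S2 [L2a L2b]].
  destruct H3 as [S3 [L3a L3b]]. destruct H4 as [S4 [L4a L4b]].
  destruct H5 as [S5 [L5a L5b]]. destruct H6 as [S6 [L6a L6b]].
  destruct H7 as [S7 [L7a L7b]]. destruct H8 as [S8 [L8a L8b]].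
  destruct H9 as [S9 [L9a L9b]]. destruct H10 as [S10 [L10a L10b]].
  destruct H11 as [S11 [L11a L11b]]. destruct H12 as [S12 [L12a L12b]].
  assert (A1 : likeA true z psi_qr) by (split; [apply tl_tz|]; apply lim_pinf_tl; auto).
  assert (B3 : likeB true z psib_qr) by (split; [|apply tl_tz]; apply lim_pinf_tl; auto).
  assert (B2 : likeB false z phi_qr) by (split; [|apply tl_tz]; apply lim_minf_tl; auto).
  assert (A4 : likeA false z phib_qr) by (split; [apply tl_tz|]; apply lim_minf_tl; auto).
  assert (A5 : likeA true z psi_uv) by (split; [apply tl_tz|]; apply lim_pinf_tl; auto).
  assert (B7 : likeB true z psib_uv) by (split; [|apply tl_tz]; apply lim_pinf_tl; auto).
  assert (B6 : likeB false z phi_uv) by (split; [|apply tl_tz]; apply lim_minf_tl; auto).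
  assert (A8 : likeA false z phib_uv) by (split; [apply tl_tz|]; apply lim_minf_tl; auto).
  assert (A9 : likeA true z psi_ps) by (split; [apply tl_tz|]; apply lim_pinf_tl; auto).
  assert (B11 : likeB true z psib_ps) by (split; [|apply tl_tz]; apply lim_pinf_tl; auto).
  assert (B10 : likeB false z phi_ps) by (split; [|apply tl_tz]; apply lim_minf_tl; auto).
  assert (A12 : likeA false z phib_ps) by (split; [apply tl_tz|]; apply lim_minf_tl; auto).
  assert (GS : forall c X, solves_U (u_seq q r D E) (v_seq q r D E) z X ->
     solves_Q q r z (fun n => cscale c (Gamma_app r D E z n (X n)))).
  { intros; apply Gamma_sol; auto. }
  assert (LS : forall c X, solves_U (p_seq q r D E) (s_seq q r D E) z X ->
     solves_Q q r z (fun n => cscale c (Lambda_app q r D E n (X n)))).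
  { intros; apply Lambda_sol; auto. }
  repeat split.
  -
    set (Y := fun n => cscale Dinf (Gamma_app r D E z n (psi_uv n))).
    assert (LY : likeA true z Y) by (apply (GA true q r D E z Dinf Einf); auto).
    destruct (diffA true z psi_qr Y Hz A1 LY) as [T1 T2].
    apply (final_unique true q r z psi_qr psib_qr psi_qr Y); auto. apply GS; auto.
  - set (Y := fun n => cscale Dinf (Lambda_app q r D E n (psi_ps n))).
    assert (LY : likeA true z Y) by (apply (LA true q r D E z Dinf Einf); auto).
    destruct (diffA true z psi_qr Y Hz A1 LY) as [T1 T2].
    apply (final_unique true q r z psi_qr psib_qr psi_qr Y); auto. apply LS; auto.
  - set (Y := fun n => cscale (/ (1 - / (z * z))) (Gamma_app r D E z n (phi_uv n))).
    assert (LY : likeB false z Y).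
    { apply (GB false q r D E z 1 1); auto. apply Cinv_l; auto. }
    destruct (diffB false z phi_qr Y Hz B2 LY) as [T1 T2].
    apply (final_unique false q r z phib_qr phi_qr phi_qr Y); auto. apply GS; auto.
  - rewrite <- (cscale1 (Lambda_app q r D E n (phi_ps n))).
    set (Y := fun n => cscale 1 (Lambda_app q r D E n (phi_ps n))).
    assert (LY : likeB false z Y) by (apply (LB false q r D E z 1 1); auto).
    destruct (diffB false z phi_qr Y Hz B2 LY) as [T1 T2].
    apply (final_unique false q r z phib_qr phi_qr phi_qr Y); auto. apply LS; auto.
  - set (Y := fun n => cscale (Einf / (1 - / (z * z))) (Gamma_app r D E z n (psib_uv n))).
    assert (LY : likeB true z Y).
    { apply (GB true q r D E z Dinf Einf); auto. unfold Cdiv. rewrite <- Cmult_assoc, Cinv_l by auto. apply Cmult_1_r. }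
    destruct (diffB true z psib_qr Y Hz B3 LY) as [T1 T2].
    apply (final_unique true q r z psi_qr psib_qr psib_qr Y); auto. apply GS; auto.
  - set (Y := fun n => cscale Einf (Lambda_app q r D E n (psib_ps n))).
    assert (LY : likeB true z Y) by (apply (LB true q r D E z Dinf Einf); auto).
    destruct (diffB true z psib_qr Y Hz B3 LY) as [T1 T2].
    apply (final_unique true q r z psi_qr psib_qr psib_qr Y); auto. apply LS; auto.
  - rewrite <- (cscale1 (Gamma_app r D E z n (phib_uv n))).
    set (Y := fun n => cscale 1 (Gamma_app r D E z n (phib_uv n))).
    assert (LY : likeA false z Y) by (apply (GA false q r D E z 1 1); auto).
    destruct (diffA false z phib_qr Y Hz A4 LY) as [T1 T2].
    apply (final_unique false q r z phib_qr phi_qr phib_qr Y); auto. apply GS; auto.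
  - rewrite <- (cscale1 (Lambda_app q r D E n (phib_ps n))).
    set (Y := fun n => cscale 1 (Lambda_app q r D E n (phib_ps n))).
    assert (LY : likeA false z Y) by (apply (LA false q r D E z 1 1); auto).
    destruct (diffA false z phib_qr Y Hz A4 LY) as [T1 T2].
    apply (final_unique false q r z phib_qr phi_qr phib_qr Y); auto. apply LS; auto.
Qed.
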